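(* Let $m,n\ge1$ and $k$ be integers with $|k|_m=n$, and let $G=\langle a,b\mid a^m=1=b^n,\ b^{-1}ab=a^k\rangle$. Let $s$ be an odd prime with $\gcd(s,m)=1$, $\zeta$ a primitive $m$-th root of unity in $\overline{\mathbb{F}}_s$, and $q$ a power of $s$. Then the induced representation $\rho^G$ is realizable over $\mathbb{F}_q$ if and only if $q\equiv k^i\pmod m$ for some $i$ with $0\le i\le n-1$.
   Context: $|k|_m$ denotes the multiplicative order of $k$ modulo $m$. $\rho:\langle a\rangle\to\overline{\mathbb{F}}_s^*$ is given by $\rho(a)=\zeta$ and $\rho^G$ is the induced representation of $G$; concretely it acts on a space with basis $e_0,\dots,e_{n-1}$ by $ae_i=\zeta^{k^i}e_i$, $be_i=e_{i+1}$ (indices modulo $n$). A representation of $G$ over $\overline{\mathbb{F}}_s$ is realizable over a subfield $\mathbb{F}_q$ if it is equivalent (over $\overline{\mathbb{F}}_s$) to a matrix representation all of whose matrices have entries in $\mathbb{F}_q$. *)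

(* Defs.v *)
From HB Require Import structures.
From mathcomp Require Import all_boot all_order all_algebra all_fingroup all_solvable all_field all_character.
Set Implicit Arguments. Unset Strict Implicit. Unset Printing Implicit Defensive.
Import GRing.Theory Num.Theory.
Local Open Scope ring_scope.

Definition is_mult_order (k : int) (m n : nat) : Prop :=
  (0 < n)%N /\ (k ^+ n = 1 %[mod m%:Z])%Z /\
  (forall i : nat, (0 < i < n)%N -> ~ (k ^+ i = 1 %[mod m%:Z])%Z).

(* the representative of k in {0,..,m-1}, used as a nat exponent in the group *)
Definition kmod (k : int) (m : nat) : nat := `|(k %% m%:Z)%Z|%N.

(* matrix of rho^G(a): a e_i = zeta^(k^i) e_i *)
Definition rhoA (F : fieldType) (n : nat) (zeta : F) (k : int) : 'M[F]_n :=
  \matrix_(i < n, j < n) (if i == j then zeta ^ (k ^+ i) else 0).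

(* matrix of rho^G(b): b e_i = e_(i+1) (indices mod n), column convention *)
Definition rhoB (F : fieldType) (n : nat) : 'M[F]_n :=
  \matrix_(i < n, j < n) (if (val i == (val j).+1 %% n)%N then 1 else 0).

(* the subfield F_q of F: the roots of X^q - X *)
Definition inFq (F : fieldType) (q : nat) (x : F) : bool := x ^+ q == x.

Definition realizable_over (F : fieldType) (gT : finGroupType) (G : {group gT})
  (n : nat) (q : nat) (rG : mx_representation F G n) : Prop :=
  exists rG' : mx_representation F G n,
    (forall g, g \in G -> forall i j, inFq q (rG' g i j)) /\ mx_rsim rG rG'.

(* Main.v *)
Require Import Defs.
From HB Require Import structures.
From mathcomp Require Import all_boot all_order all_algebra all_fingroup all_solvable all_field all_character.
Import GRing.Theory Num.Theory.
Set Implicit Arguments. Unset Strict Implicit. Unset Printing Implicit Defensive.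
Local Open Scope ring_scope.

Section Frob.
Variables (F : fieldType) (q : nat).
Definition frobq of [pchar F].-nat q := fun x : F => x ^+ q.
Hypothesis hq : [pchar F].-nat q.
Lemma frobq_nmod : nmod_morphism (frobq hq).
Proof. by split=> [|x y]; rewrite /frobq ?expr0n ?exprDn_pchar //; case: q hq. Qed.
Lemma frobq_monoid : monoid_morphism (frobq hq).
Proof. by split=> [|x y]; rewrite /frobq ?expr1n ?exprMn. Qed.
HB.instance Definition _ := GRing.isNmodMorphism.Build F F (frobq hq) frobq_nmod.
HB.instance Definition _ := GRing.isMonoidMorphism.Build F F (frobq hq) frobq_monoid.
End Frob.

Section Arith.
Variables (F : fieldType) (m : nat) (zeta : F).
Hypothesis m_gt0 : (0 < m)%N.
Hypothesis zp : m.-primitive_root zeta.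

Lemma zeta_unit : zeta \is a GRing.unit.
Proof.
rewrite unitfE; apply/eqP=> z0.
by move: (prim_expr_order zp); rewrite z0 expr0n; case: m m_gt0 => // ? _ /eqP; rewrite eq_sym oner_eq0.
Qed.

Lemma zeta_exprz (z : int) : zeta ^ z = zeta ^+ `|(z %% m%:Z)%Z|%N.
Proof.
have m0 : m%:Z != 0 by rewrite eqz_nat -lt0n.
rewrite {1}(divz_eq z m) exprzDr ?zeta_unit // [X in zeta ^ X]mulrC -exprz_exp.
have -> : zeta ^ m%:Z = 1 by rewrite -exprnP; exact: prim_expr_order.
by rewrite exp1rz ?mul1r ?mulr1 -{1}(gez0_abs (modz_ge0 z m0)).
Qed.

Lemma zeta_exprz_eq (z1 z2 : int) : (zeta ^ z1 = zeta ^ z2) <-> (z1 = z2 %[mod m%:Z])%Z.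
Proof.
have m0 : m%:Z != 0 by rewrite eqz_nat -lt0n.
rewrite !zeta_exprz; split=> [/eqP|]; last by move=> ->.
rewrite (eq_prim_root_expr zp) => /eqP.
have lt z : (`|(z %% m%:Z)%Z| < m)%N.
  by rewrite -ltz_nat gez0_abs ?modz_ge0 // ltz_mod.
rewrite !modn_small ?lt //.
by move=> h; rewrite -(gez0_abs (modz_ge0 z1 m0)) -(gez0_abs (modz_ge0 z2 m0)) h.
Qed.
End Arith.
Section KArith.
Variables (m n : nat) (k : int).
Hypothesis hk : is_mult_order k m n.

Lemma modzM_r (a b c : int) : (a = b %[mod m%:Z])%Z -> (a * c = b * c %[mod m%:Z])%Z.
Proof. by move=> h; rewrite -modzMml h modzMml. Qed.
Lemma modzM_l (a b c : int) : (a = b %[mod m%:Z])%Z -> (c * a = c * b %[mod m%:Z])%Z.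
Proof. by move=> h; rewrite -modzMmr h modzMmr. Qed.

Lemma kexp_mod (j : nat) : (k ^+ j = k ^+ (j %% n) %[mod m%:Z])%Z.
Proof.
case: hk => _ [hn _].
rewrite {1}(divn_eq j n) exprD mulnC exprM -modzMml -modzXm hn modzXm expr1n.
by rewrite modzMml mul1r.
Qed.

Lemma kdist (r t : nat) : (r < n)%N -> (t < n)%N ->
  (k ^+ r = k ^+ t %[mod m%:Z])%Z -> r = t.
Proof.
case: hk => n0 [hn hno].
wlog lrt : r t / (r <= t)%N.
  move=> W rn tn h; case: (leqP r t) => [l|l]; first exact: W.
  by apply/esym/W => //; apply: ltnW.
move=> rn tn h; move: lrt; rewrite leq_eqVlt => /orP[/eqP//|lt].
have tn' : (t <= n)%N by apply: ltnW.
exfalso; apply: (hno (r + (n - t))%N).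
  rewrite addn_gt0 subn_gt0 tn orbT /=.
  by rewrite -{2}(subnKC tn') ltn_add2r.
rewrite exprD (modzM_r (k ^+ (n - t)) h) -exprD subnKC //.
Qed.
End KArith.
Section Mx.
Variables (F : fieldType) (n : nat) (sg : {rmorphism F -> F}).

Definition pmx (f : 'I_n -> 'I_n) : 'M[F]_n := \matrix_(r, s) ((s == f r)%:R).

Lemma pmxE f (M : 'M[F]_n) r c : (pmx f *m M) r c = M (f r) c.
Proof.
rewrite mxE (bigD1 (f r)) //= mxE eqxx mul1r big1 ?addr0 // => t /negbTE.
by rewrite mxE => ->; rewrite mul0r.
Qed.

Lemma pmxM f g : pmx f *m pmx g = pmx (g \o f).
Proof. by apply/matrixP=> r s; rewrite pmxE !mxE. Qed.

Lemma map_pmx f : map_mx sg (pmx f) = pmx f.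
Proof. by apply/matrixP=> r s; rewrite !mxE rmorph_nat. Qed.

Lemma fixed_conj (A Q X : 'M[F]_n) : X \in unitmx -> map_mx sg X = Q *m X ->
  map_mx sg A *m Q = Q *m A ->
  map_mx sg (invmx X *m A *m X) = invmx X *m A *m X.
Proof.
move=> uX sX sA; set M := invmx X *m A *m X.
have XM : X *m M = A *m X by rewrite /M !mulmxA mulmxV ?mul1mx.
have uX' : map_mx sg X \in unitmx by rewrite map_unitmx.
have : map_mx sg X *m map_mx sg M = map_mx sg X *m M.
  rewrite -map_mxM XM map_mxM sX mulmxA sA -mulmxA -XM !mulmxA.
  done.
by move/(congr1 (mulmx (invmx (map_mx sg X)))); rewrite !mulKmx.
Qed.

Variable y : 'I_n -> F.
Definition Dmx : 'M[F]_n := diag_mx (\row_r y r).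
Definition Xmx : 'M[F]_n := \matrix_(r, c) y r ^+ c.

Lemma sigma_X f : (forall r, sg (y r) = y (f r)) -> map_mx sg Xmx = pmx f *m Xmx.
Proof. by move=> h; apply/matrixP=> r c; rewrite pmxE !mxE rmorphXn h. Qed.

Lemma sigma_D f : (forall r, sg (y r) = y (f r)) ->
  map_mx sg Dmx *m pmx f = pmx f *m Dmx.
Proof.
move=> h; apply/matrixP=> r s; rewrite /Dmx map_diag_mx mul_diag_mx mul_mx_diag !mxE h.
by case: eqP => [->|]; rewrite ?mulr1 ?mul1r ?mulr0 ?mul0r.
Qed.

Lemma Xmx_unit : injective y -> Xmx \in unitmx.
Proof.
move=> iy; have -> : Xmx = (Vandermonde n (\row_r y r))^T.
  by apply/matrixP=> r c; rewrite !mxE.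
rewrite unitmxE det_tr det_Vandermonde unitfE.
apply/prodf_neq0 => i _; apply/prodf_neq0 => j lij; rewrite !mxE subr_eq0.
by apply/eqP=> /iy eij; move: lij; rewrite eij ltnn.
Qed.
End Mx.
Arguments pmx {F n} f.
Section Shift.
Variables (F : fieldType) (n' : nat).
Local Notation N := n'.+1.
Definition sh (j : nat) (r : 'I_N) : 'I_N := inord ((r + j) %% N).
Lemma sh_val j r : nat_of_ord (sh j r) = ((r + j) %% N)%N.
Proof. by rewrite inordK // ltn_pmod. Qed.

Lemma rhoB_pmx : rhoB F N = pmx (sh n').
Proof.
apply/matrixP=> r s; rewrite !mxE.
suff -> : (\val r == ((\val s).+1 %% N)%N) = (s == sh n' r) by case: (_ == _).
have rlt := ltn_ord r; have slt := ltn_ord s.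
apply/idP/idP => /eqP h; apply/eqP.
  by apply: val_inj; rewrite /= sh_val h modnDml addSn -addnS modnDr modn_small.
rewrite h /= sh_val.
have e : ((r + n') %% N).+1 = ((r + n') %% N + 1)%N by rewrite addn1.
by rewrite e modnDml -addnA addn1 modnDr modn_small.
Qed.

Lemma pmx_sh_comm a b : pmx (sh a) *m pmx (sh b) = pmx (sh b) *m pmx (sh a) :> 'M[F]_N.
Proof.
apply/matrixP=> r s; rewrite !pmxE !mxE; congr ((_ == _)%:R).
by apply: val_inj; rewrite /= !sh_val !modnDml addnAC.
Qed.
End Shift.
Unset Implicit Arguments.
Theorem theorem2p5 (m n : nat) (k : int)
  (gT : finGroupType) (G : {group gT}) (a b : gT)
  (s q : nat) (F : closedFieldType) (zeta : F)
  (rG : mx_representation F G n) :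
  (0 < m)%N -> (0 < n)%N -> is_mult_order k m n ->
  (* G = < a, b | a^m = 1 = b^n, b^-1 a b = a^k > with generators a, b *)
  (G \isog Grp (x : y : x ^+ m, y ^+ n, x ^ y = x ^+ kmod k m))%g ->
  (<[a]> <*> <[b]>)%g = G -> (a ^+ m = 1)%g -> (b ^+ n = 1)%g ->
  (a ^ b = a ^+ kmod k m)%g ->
  (* F is an algebraic closure of F_s, s an odd prime coprime to m *)
  prime s -> odd s -> coprime s m -> (s \in [pchar F])%N ->
  (forall x : F, exists e : nat, (0 < e)%N /\ x ^+ (s ^ e) = x) ->
  m.-primitive_root zeta ->
  (exists e : nat, (0 < e)%N /\ q = (s ^ e)%N) ->
  (* rG is the induced representation rho^G *)
  rG a = rhoA n zeta k -> rG b = rhoB F n ->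
  realizable_over q rG <->
  (exists i : nat, (i <= n - 1)%N /\ (q%:Z = k ^+ i %[mod m%:Z])%Z).
Proof.
move=> m0 n0 hk _ HG _ _ _ ps _ _ sF _ zp [e [e0 qe]] HA HB.
have [n' En] : exists n', n = n'.+1 by case: (n) n0 => // n'' _; exists n''.
subst n.
have hqn : [pchar F].-nat q by rewrite qe pnatX pnatE // sF.
pose sg : {rmorphism F -> F} := @frobq _ _ hqn.
have sgE x : sg x = x ^+ q by [].
pose y (r : 'I_n'.+1) := zeta ^ (k ^+ r).
have HD : rhoA n'.+1 zeta k = Dmx y.
  apply/matrixP=> r c; rewrite !mxE; case: eqP => [->|]; first by rewrite mulr1n.
  by rewrite mulr0n.
have iy : injective y.
  move=> r t /(zeta_exprz_eq m0 zp) h; apply: val_inj.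
  exact: (kdist hk (ltn_ord r) (ltn_ord t) h).
have Ga : a \in G by rewrite -HG mem_gen // inE cycle_id.
have Gb : b \in G by rewrite -HG mem_gen // inE cycle_id orbT.
split.
  case=> rG2 [hE [B _ fB homB]].
  move: fB; rewrite row_free_unit => uB.
  pose Nm := rG2 a.
  have sN : map_mx sg Nm = Nm.
    by apply/matrixP=> r c; rewrite mxE sgE; apply/eqP; apply: hE.
  have DE : Dmx y = B *m Nm *m invmx B by rewrite -HD -HA -homB // mulmxK.
  pose w : 'rV[F]_n'.+1 := delta_mx 0 0.
  have w0 : w != 0.
    by apply/eqP=> /(congr1 (fun M : 'rV[F]_n'.+1 => M 0 0)); rewrite !mxE eqxx /= => /eqP; rewrite oner_eq0.
  have wD : w *m Dmx y = zeta *: w.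
    apply/matrixP=> r c; rewrite mul_mx_diag !mxE (ord1 r) eqxx /=.
    case: (c =P 0) => [->|]; last by rewrite mul0r mulr0.
    by rewrite /y expr0 expr1z mulrC.
  pose v := w *m B.
  have vN : v *m Nm = zeta *: v.
    have BN : B *m Nm = Dmx y *m B by rewrite DE mulmxKV.
    by rewrite /v -mulmxA BN mulmxA wD scalemxAl.
  have v0 : v != 0.
    apply: contraNneq w0 => h; rewrite -(mulmxK uB w) -/v h mul0mx //.
  pose u := map_mx sg v *m invmx B.
  have u0 : u != 0.
    apply: contraNneq v0 => h.
    by rewrite -(map_mx_eq0 sg) -(mulmxKV uB (map_mx sg v)) -/u h mul0mx.
  have uD : u *m Dmx y = sg zeta *: u.
    rewrite DE /u !mulmxA mulmxKV // -sN -map_mxM vN map_mxZ -scalemxAl //.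
  clearbody u.
  have [c uc] : exists c, u 0 c != 0.
    case: (pickP (fun c => u 0 c != 0)) => [c h|h]; first by exists c.
    exfalso; move/eqP: u0; apply; apply/matrixP=> r c; rewrite (ord1 r) mxE.
    by move: (h c) => /= /negbFE /eqP.
  have : (u *m Dmx y) 0 c = (sg zeta *: u) 0 c by rewrite uD.
  rewrite mul_mx_diag !mxE mulrC => hh; have := mulIf uc hh.
  rewrite sgE exprnP => /(zeta_exprz_eq m0 zp) h.
  by exists c; split; [rewrite subn1 -ltnS ltn_ord | rewrite h].
case=> i [_ hi].
have sy r : sg (y r) = y (sh i r).
  rewrite sgE /y exprnP exprz_exp; apply/(zeta_exprz_eq m0 zp).
  rewrite sh_val -(kexp_mod hk) exprD.
  by apply: modzM_l; rewrite hi.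
have uX : Xmx y \in unitmx by apply: Xmx_unit.
pose X := Xmx y.
have sX : map_mx sg X = pmx (sh i) *m X by apply: sigma_X.
have uB : invmx X \in unitmx by rewrite unitmx_inv.
exists (rconj_repr rG uB).
split; last first.
  exists X => //; first by rewrite row_free_unit.
  by move=> x Gx; rewrite rconj_mxE invmxK !mulmxA mulmxV // mul1mx.
pose S := [set g in G | map_mx sg (invmx X *m rG g *m X) == invmx X *m rG g *m X].
have gS : group_set S.
  apply/group_setP; split.
    by rewrite inE group1 repr_mx1 mulmx1 mulVmx // map_mx1 eqxx.
  move=> x z; rewrite !inE => /andP[Gx /eqP hx] /andP[Gz /eqP hz].
  rewrite groupM //= repr_mxM //.
  have -> : invmx X *m (rG x *m rG z) *m X = (invmx X *m rG x *m X) *m (invmx X *m rG z *m X).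
    by rewrite !mulmxA mulmxK.
  by rewrite map_mxM hx hz.
have GS : G \subset group gS.
  rewrite -HG join_subG !cycle_subG !inE Ga Gb /=; apply/andP; split; apply/eqP.
    rewrite HA HD; apply: fixed_conj uX sX _; exact: sigma_D.
  rewrite HB rhoB_pmx; apply: fixed_conj uX sX _.
  by rewrite map_pmx pmx_sh_comm.
move=> g Gg r c; rewrite rconj_mxE invmxK /inFq.
have := subsetP GS g Gg; rewrite inE => /andP[_ /eqP] /(congr1 (fun M : 'M[F]_n'.+1 => M r c)).
by rewrite mxE sgE => ->.
Qed.
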